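(* The cardinal $\mathfrak{gp}$ is well-defined (i.e. some cardinal $\kappa$ has the defining property), and $\aleph_1\leq\mathfrak{gp}\leq 2^{\aleph_0}$.
   Context: $\mathfrak{gp}$ is the minimal cardinal $\kappa$ such that every family (repetitions allowed) $\{C_\alpha:\alpha<\kappa^+\}$ of club subsets of $\omega_1$ contains a subfamily $\{C_{\alpha_\beta}:\beta<\omega_1\}$ (distinct indices $\alpha_\beta$) whose intersection is a club subset of $\omega_1$. *)

(* Defs.v *)
(* Cardinals are represented by types, compared via injections. *)
From Stdlib Require Import Classical.

Definition card_le (A B : Type) : Prop :=
  exists f : A -> B, forall x y, f x = f y -> x = y.

Definition card_lt (A B : Type) : Prop := card_le A B /\ ~ card_le B A.

Definition is_succ_card (K I : Type) : Prop :=
  card_lt K I /\ forall J : Type, card_lt J I -> card_le J K.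

Definition is_omega1 (W : Type) (lt : W -> W -> Prop) : Prop :=
  (forall x, ~ lt x x) /\
  (forall x y z, lt x y -> lt y z -> lt x z) /\
  (forall x y, lt x y \/ x = y \/ lt y x) /\
  well_founded lt /\
  ~ card_le W nat /\
  (forall a : W, card_le {b : W | lt b a} nat).

Definition unbounded (W : Type) (lt : W -> W -> Prop) (C : W -> Prop) : Prop :=
  forall a, exists b, C b /\ lt a b.

Definition closed (W : Type) (lt : W -> W -> Prop) (C : W -> Prop) : Prop :=
  forall a, (exists g, C g /\ lt g a) ->
            (forall b, lt b a -> exists g, C g /\ lt b g /\ lt g a) ->
            C a.

Definition club (W : Type) (lt : W -> W -> Prop) (C : W -> Prop) : Prop :=
  closed W lt C /\ unbounded W lt C.

(* The defining property of gp, for a candidate cardinal K: every family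
   (repetitions allowed) of club sets indexed by a set of size K^+ contains an
   omega_1-subfamily with distinct indices whose intersection is club. *)
Definition gp_property (W : Type) (lt : W -> W -> Prop) (K : Type) : Prop :=
  forall (I : Type), is_succ_card K I ->
  forall C : I -> W -> Prop, (forall i, club W lt (C i)) ->
  exists f : W -> I, (forall x y, f x = f y -> x = y) /\
    club W lt (fun a => forall b, C (f b) a).

(* Main.v *)
Require Import Defs.
From Stdlib Require Import Classical ClassicalEpsilon FunctionalExtensionality PropExtensionality ProofIrrelevance.
From Stdlib Require Import Wellfounded Lia Arith Cantor.
From mathcomp Require ssreflect ssrfun ssrbool eqtype ssrnat seq boolp wochoice.

Module WO.
Import ssreflect ssrfun ssrbool eqtype ssrnat seq boolp wochoice.
Lemma exists_wo (T : Type) : exists lt : T -> T -> Prop,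
  (forall x, ~ lt x x) /\ (forall x y z, lt x y -> lt y z -> lt x z) /\
  (forall x y, lt x y \/ x = y \/ lt y x) /\ well_founded lt.
Proof.
pose T' := {classic T}.
have [R Rwo] := @well_ordering_principle T'.
have Rmin : forall A : T' -> Prop, (exists x, A x) -> exists z, A z /\ forall x, A x -> R z x.
  move=> A [x Ax].
  have /Rwo[z [[Az lb] _]] : nonempty (fun z : T' => `[< A z >]).
    by exists x; apply/asboolP.
  exists z; split; first by move: Az => /asboolP.
  by move=> w Aw; apply: lb; apply/asboolP.
have Rtot : forall x y : T', R x y \/ R y x.
  move=> x y; have [|z [[->|->] lb]] := Rmin (fun z => z = x \/ z = y).
  - by exists x; left.
  - by left; apply: lb; right.
  - by right; apply: lb; left.
have Rrefl : forall x : T', R x x by move=> x; case: (Rtot x x).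
have Ranti : forall x y : T', R x y -> R y x -> x = y.
  move=> x y Rxy Ryx.
  have /Rwo[z [_ uniq]] : nonempty (fun z : T' => `[< z = x \/ z = y >]).
    by exists x; apply/asboolP; left.
  have ux : z = x.
    apply: uniq; split; first by apply/asboolP; left.
    by move=> w /asboolP [->|->]; [apply: Rrefl|].
  have uy : z = y.
    apply: uniq; split; first by apply/asboolP; right.
    by move=> w /asboolP [->|->]; [|apply: Rrefl].
  by rewrite -ux uy.
exists (fun x y : T => R x y /\ x <> y).
split; first by move=> x [_ ].
split.
  move=> x y z [Rxy nxy] [Ryz nyz]; split.
  - have [|m [Hm lb]] := Rmin (fun w => w = x \/ w = y \/ w = z).
      by exists x; left.
    case: Hm => [Em|[Em|Em]]; subst m.
    + by apply: lb; right; right.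
    + by have := Ranti _ _ Rxy (lb x (or_introl erefl)) => E; subst.
    + have Rzy := lb y (or_intror (or_introl erefl)).
      by have := Ranti _ _ Ryz Rzy.
  - move=> Exz; subst z; apply: nxy; exact: Ranti.
split.
  move=> x y; case: (Rtot x y) => H.
  - have [->|nxy] := EM (x = y); [by right; left | by left].
  - have [->|nxy] := EM (x = y); [by right; left | right; right; split => // E; by subst].
move=> x; apply: NNPP => nAx.
have [|m [Hm lb]] := Rmin (fun z : T' => ~ Acc (fun x y : T => R x y /\ x <> y) z).
  by exists x.
apply: Hm; constructor => y [Ryz nym].
apply: NNPP => nAy; apply: nym; apply: Ranti => //; exact: lb.
Qed.
End WO.

Lemma test_lia (n m : nat) : n <= m -> n < S m.
Proof. intros; lia. Qed.

Lemma card_le_refl (A : Type) : card_le A A.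
Proof. exists (fun x => x); auto. Qed.

Lemma card_le_trans (A B C : Type) : card_le A B -> card_le B C -> card_le A C.
Proof.
  intros [f Hf] [g Hg]; exists (fun x => g (f x)); auto.
Qed.

Lemma card_le_sub (A : Type) (P : A -> Prop) : card_le {x | P x} A.
Proof.
  exists (@proj1_sig _ _); intros [x px] [y py] e; simpl in e; subst.
  f_equal; apply proof_irrelevance.
Qed.

Lemma wf_rec (X Y : Type) (lt : X -> X -> Prop) (wf : well_founded lt) (y0 : Y)
  (P : X -> (Y -> Prop) -> Y -> Prop) :
  (forall x (g : X -> Y), exists y, P x (fun y => exists x', lt x' x /\ g x' = y) y) ->
  exists f : X -> Y, forall x, P x (fun y => exists x', lt x' x /\ f x' = y) (f x).
Proof.
  intros H.
  set (ext := fun x (rec : forall x', lt x' x -> Y) (x' : X) =>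
     match excluded_middle_informative (lt x' x) with left h => rec x' h | right _ => y0 end).
  set (F := fun x rec => proj1_sig (constructive_indefinite_description _ (H x (ext x rec)))).
  exists (Fix wf (fun _ => Y) F).
  intro x.
  rewrite Fix_eq.
  - generalize (Fix wf (fun _ => Y) F); intro fx. unfold F. match goal with |- context [constructive_indefinite_description ?Q ?p] =>
      destruct (constructive_indefinite_description Q p) as [y Hy] end. simpl.
    match goal with |- P x ?Q y => replace Q with
      (fun y0 => exists x', lt x' x /\ ext x (fun y1 (_ : lt y1 x) => fx y1) x' = y0) end.
    + exact Hy.
    + apply functional_extensionality; intro z; apply propositional_extensionality; split;
        intros [x' [h e]]; exists x'; split; auto; unfold ext in *;
        destruct (excluded_middle_informative (lt x' x)); tauto.
  - intros x0 f g Hfg.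
    assert (f = g) as E.
    { apply functional_extensionality_dep; intro a; apply functional_extensionality_dep; intro b; auto. }
    subst; reflexivity.
Qed.

Lemma wf_min (X : Type) (lt : X -> X -> Prop) (wf : well_founded lt) (P : X -> Prop) :
  (exists x, P x) -> exists x, P x /\ forall z, lt z x -> ~ P z.
Proof.
  intros [x Px]. apply NNPP; intro N.
  assert (forall y, ~ P y) as A.
  { intro y; induction (wf y) as [y _ IH]; intro Py; apply N; exists y; split; auto. }
  eapply A; eauto.
Qed.

Lemma card_total (A B : Type) : card_le A B \/ card_le B A.
Proof.
  destruct (classic (inhabited B)) as [[y0]|nB].
  2:{ right; exists (fun b => False_rect _ (nB (inhabits b))); intros b; exfalso; apply nB; constructor; auto. }
  destruct (WO.exists_wo A) as [lt [Hirr [Htr [Htot Hwf]]]].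
  destruct (wf_rec A B lt Hwf y0 (fun a Q y => (exists z, ~ Q z) -> ~ Q y)) as [h Hh].
  { intros x g. destruct (classic (exists z, ~ (exists x', lt x' x /\ g x' = z))) as [[z Hz]|Hn].
    - exists z; auto.
    - exists y0; intro C; contradiction. }
  destruct (classic (forall b, exists a, h a = b)) as [Hs|Hs].
  - right. exists (fun b => proj1_sig (constructive_indefinite_description _ (Hs b))).
    intros b1 b2 e.
    destruct (constructive_indefinite_description _ (Hs b1)) as [a1 e1].
    destruct (constructive_indefinite_description _ (Hs b2)) as [a2 e2]. simpl in e. subst; auto.
  - left. apply not_all_ex_not in Hs. destruct Hs as [b0 Hb0].
    assert (Hne : forall a, exists z, ~ (exists x', lt x' a /\ h x' = z)).
    { intro a; exists b0; intros [x' [_ e]]; apply Hb0; eauto. }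
    exists h. intros a1 a2 e.
    destruct (Htot a1 a2) as [l|[l|l]]; auto.
    + exfalso; apply (Hh a2 (Hne a2)); eauto.
    + exfalso; apply (Hh a1 (Hne a1)); eauto.
Qed.

Lemma order_type (T A : Type) (R : T -> T -> Prop)
  (Rtot : forall x y, R x y \/ x = y \/ R y x) (Rwf : well_founded R)
  (g : A -> T) (ginj : forall a b, g a = g b -> a = b) :
  (exists y, card_le A {t | R t y} /\ card_le {t | R t y} A) \/ card_le T A.
Proof.
  destruct (classic (inhabited T)) as [[y0]|nT].
  2:{ right; exists (fun t => False_rect _ (nT (inhabits t))); intros t; exfalso; apply nT; constructor; auto. }
  set (ltA := fun a b => R (g a) (g b)).
  assert (wfA : well_founded ltA) by exact (wf_inverse_image A T R g Rwf).
  destruct (wf_rec A T ltA wfA y0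
     (fun a Q y => (exists z, ~ Q z) -> ~ Q y /\ forall z, R z y -> Q z)) as [h Hh].
  { intros x k. destruct (classic (exists z, ~ (exists x', ltA x' x /\ k x' = z))) as [Hz|Hn].
    - destruct (wf_min T R Rwf _ Hz) as [m [Hm Hmin]].
      exists m; intros _; split; auto.
      intros z Rz; apply NNPP; apply Hmin; auto.
    - exists y0; intro C; contradiction. }
  destruct (classic (forall t, exists a, h a = t)) as [Hs|Hs].
  - right. exists (fun b => proj1_sig (constructive_indefinite_description _ (Hs b))).
    intros b1 b2 e.
    destruct (constructive_indefinite_description _ (Hs b1)) as [a1 e1].
    destruct (constructive_indefinite_description _ (Hs b2)) as [a2 e2]. simpl in e. subst; auto.
  - left. apply not_all_ex_not in Hs. destruct Hs as [t0 Ht0].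
    assert (Hne : forall a, exists z, ~ (exists x', ltA x' a /\ h x' = z)).
    { intro a; exists t0; intros [x' [_ e]]; apply Ht0; eauto. }
    assert (hinj : forall a1 a2, h a1 = h a2 -> a1 = a2).
    { intros a1 a2 e.
      destruct (Rtot (g a1) (g a2)) as [l|[l|l]]; auto.
      + exfalso; apply (proj1 (Hh a2 (Hne a2))); eauto.
      + exfalso; apply (proj1 (Hh a1 (Hne a1))); eauto. }
    destruct (wf_min T R Rwf (fun t => ~ exists a, h a = t)) as [y [Hy Hymin]]; eauto.
    assert (claim : forall t, (exists a, h a = t) <-> R t y).
    { intro t; split.
      - intros [a e]. destruct (Rtot t y) as [l|[l|l]]; auto.
        + subst; exfalso; eauto.
        + exfalso. apply Hy. subst t.
          destruct (proj2 (Hh a (Hne a)) y l) as [a' [_ e']]; eauto.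
      - intros l; apply NNPP; apply Hymin; auto. }
    exists y; split.
    + exists (fun a => exist _ (h a) (proj1 (claim (h a)) (ex_intro _ a eq_refl))).
      intros a1 a2 e. apply hinj. apply (f_equal (@proj1_sig _ _)) in e. exact e.
    + exists (fun t => proj1_sig (constructive_indefinite_description _ (proj2 (claim (proj1_sig t)) (proj2_sig t)))).
      intros [t1 p1] [t2 p2] e. simpl in e.
      destruct (constructive_indefinite_description _ (proj2 (claim t1) p1)) as [a1 e1].
      destruct (constructive_indefinite_description _ (proj2 (claim t2) p2)) as [a2 e2].
      simpl in e. subst. f_equal. apply proof_irrelevance.
Qed.

Lemma gp_transfer (W : Type) (lt : W -> W -> Prop) (A B : Type) :
  card_le A B -> card_le B A -> gp_property W lt A -> gp_property W lt B.
Proof.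
  intros AB BA H I [[BI nIB] HJ] C HC. apply H; auto.
  split; [split|].
  - eapply card_le_trans; eauto.
  - intro IA; apply nIB; eapply card_le_trans; eauto.
  - intros J HJ'; eapply card_le_trans; eauto.
Qed.

Definition ctbl {X : Type} (P : X -> Prop) :=
  exists e : X -> nat, forall x y, P x -> P y -> e x = e y -> x = y.

Lemma fchoice {A B : Type} (R : A -> B -> Prop) :
  (forall a, exists b, R a b) -> exists f : A -> B, forall a, R a (f a).
Proof.
  intro H; exists (fun a => proj1_sig (constructive_indefinite_description _ (H a))).
  intro a; destruct (constructive_indefinite_description _ (H a)); auto.
Qed.

Lemma ctbl_of_card {X : Type} (P : X -> Prop) : card_le {x | P x} nat -> ctbl P.
Proof.
  intros [e He].
  exists (fun x => match excluded_middle_informative (P x) with left p => e (exist _ x p) | right _ => 0 end).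
  intros x y px py. destruct (excluded_middle_informative (P x)); [|contradiction].
  destruct (excluded_middle_informative (P y)); [|contradiction].
  intro E; apply He in E. apply (f_equal (@proj1_sig _ _)) in E; auto.
Qed.

Lemma card_of_ctbl {X : Type} (P : X -> Prop) : ctbl P -> card_le {x | P x} nat.
Proof.
  intros [e He]. exists (fun s => e (proj1_sig s)).
  intros [x px] [y py] E; simpl in E. assert (x = y) by auto. subst; f_equal; apply proof_irrelevance.
Qed.

Lemma ctbl_image {X Z : Type} (D : X -> Prop) (h : X -> Z) :
  ctbl D -> ctbl (fun z => exists x, D x /\ h x = z).
Proof.
  intros [e He].
  exists (fun z => match excluded_middle_informative (exists x, D x /\ h x = z) with
    left p => e (proj1_sig (constructive_indefinite_description _ p)) | right _ => 0 end).
  intros z1 z2 p1 p2.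
  destruct (excluded_middle_informative (exists x, D x /\ h x = z1)) as [q1|]; [|contradiction].
  destruct (excluded_middle_informative (exists x, D x /\ h x = z2)) as [q2|]; [|contradiction].
  destruct (constructive_indefinite_description _ q1) as [x1 [d1 e1]].
  destruct (constructive_indefinite_description _ q2) as [x2 [d2 e2]]. simpl.
  intro E. assert (x1 = x2) by auto. subst; auto.
Qed.

Lemma ctbl_sub {X : Type} (P Q : X -> Prop) : (forall x, P x -> Q x) -> ctbl Q -> ctbl P.
Proof. intros H [e He]; exists e; auto. Qed.

Lemma ctbl_add {X : Type} (P : X -> Prop) (d : X) : ctbl P -> ctbl (fun x => P x \/ x = d).
Proof.
  intros [e He].
  exists (fun x => match excluded_middle_informative (P x) with left _ => S (e x) | right _ => 0 end).
  intros x y px py.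
  destruct (excluded_middle_informative (P x)); destruct (excluded_middle_informative (P y)); intro E;
    try discriminate.
  - injection E; auto.
  - destruct px; destruct py; subst; tauto.
Qed.

Definition pairT (p : (nat -> bool) * (nat -> bool)) : nat -> bool :=
  fun n => match of_nat n with (0, m) => fst p m | (_, m) => snd p m end.

Lemma pairT_inj : forall p q, pairT p = pairT q -> p = q.
Proof.
  intros [a b] [a' b'] e.
  assert (a = a').
  { apply functional_extensionality; intro m. apply (f_equal (fun h => h (to_nat (0, m)))) in e.
    unfold pairT in e. rewrite cancel_of_to in e. exact e. }
  assert (b = b').
  { apply functional_extensionality; intro m. apply (f_equal (fun h => h (to_nat (1, m)))) in e.
    unfold pairT in e. rewrite cancel_of_to in e. exact e. }
  subst; auto.
Qed.

Lemma ctbl_le_T {X : Type} (P : X -> Prop) : ctbl P -> card_le {x | P x} (nat -> bool).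
Proof.
  intro H. eapply card_le_trans. apply card_of_ctbl; exact H.
  exists (fun n m => Nat.eqb m n). intros x y e.
  apply (f_equal (fun h => h x)) in e. rewrite Nat.eqb_refl in e. symmetry in e.
  apply Nat.eqb_eq in e; auto.
Qed.

Lemma diag (Q : (nat -> bool) -> Prop) : ctbl Q -> exists t, ~ Q t.
Proof.
  intros [e He].
  set (d := fun n => negb (match excluded_middle_informative (exists t, Q t /\ e t = n) with
      left p => (proj1_sig (constructive_indefinite_description _ p)) n | right _ => false end)).
  exists d. intro Qd.
  assert (Hd : d (e d) = negb (d (e d))).
  { unfold d at 1. destruct (excluded_middle_informative (exists t, Q t /\ e t = e d)) as [p|n].
    - destruct (constructive_indefinite_description _ p) as [t [Qt et]]. simpl.
      assert (t = d) by auto. subst. reflexivity.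
    - exfalso; apply n; eauto. }
  destruct (d (e d)); discriminate.
Qed.

Section OmegaOne.
Variable W : Type.
Variable lt : W -> W -> Prop.
Hypothesis Hw : is_omega1 W lt.

Definition le x y := lt x y \/ x = y.

Lemma Hirr : forall x, ~ lt x x. Proof. apply Hw. Qed.
Lemma Htr : forall x y z, lt x y -> lt y z -> lt x z. Proof. apply Hw. Qed.
Lemma Htot : forall x y, lt x y \/ x = y \/ lt y x. Proof. apply Hw. Qed.
Lemma Hwf : well_founded lt. Proof. apply Hw. Qed.
Lemma Hunc : ~ card_le W nat. Proof. apply Hw. Qed.
Lemma Hseg : forall a, ctbl (fun b => lt b a).
Proof. intro a; apply ctbl_of_card; apply Hw. Qed.

Lemma Hsegle : forall a, ctbl (fun b => le b a).
Proof. intro a; apply ctbl_add; apply Hseg. Qed.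

Lemma bounded (Q : W -> Prop) : ctbl Q -> exists u, forall x, Q x -> lt x u.
Proof.
  intros [eQ HQ]. apply NNPP; intro N.
  assert (H : forall u, exists x, Q x /\ le u x).
  { intro u. apply NNPP; intro N2; apply N; exists u; intros x qx.
    destruct (Htot x u) as [l|[l|l]]; auto; exfalso; apply N2; exists x; split; auto; unfold le; auto. }
  destruct (fchoice _ H) as [xu Hxu].
  destruct (fchoice _ Hsegle) as [E HE].
  apply Hunc. exists (fun u => to_nat (eQ (xu u), E (xu u) u)).
  intros u v e. apply (f_equal of_nat) in e. rewrite !cancel_of_to in e. injection e; intros e2 e1.
  destruct (Hxu u) as [qu lu]. destruct (Hxu v) as [qv lv].
  assert (xu u = xu v) as X by auto. rewrite <- X in e2, lv. eapply HE; eauto.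
Qed.

Lemma no_max : forall a, exists b, lt a b.
Proof.
  intro a. destruct (bounded _ (Hsegle a)) as [u Hu]. exists u. apply Hu. right; auto.
Qed.

Lemma seg_image_ctbl {Y : Type} (x : W) (g : W -> Y) : ctbl (fun y => exists x', lt x' x /\ g x' = y).
Proof. apply ctbl_image. apply Hseg. Qed.

Lemma mono_le (y : nat -> W) : (forall n, lt (y n) (y (S n))) ->
  forall n m, n <= m -> y n = y m \/ lt (y n) (y m).
Proof.
  intros Hy n m H. induction H; auto.
  destruct IHle as [e|l]; right; [rewrite e; auto|eapply Htr; eauto].
Qed.

Lemma sup (y : nat -> W) : (forall n, lt (y n) (y (S n))) ->
  exists s, (forall n, lt (y n) s) /\ forall b, lt b s -> exists n, lt b (y n).
Proof.
  intros Hy.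
  assert (ctbl (fun w => exists n, True /\ y n = w)) as Hc.
  { apply ctbl_image. exists (fun n => n); auto. }
  destruct (bounded _ Hc) as [u Hu].
  destruct (wf_min W lt Hwf (fun s => forall n, lt (y n) s)) as [s [Hs Hsmin]].
  { exists u; intro n; apply Hu; eauto. }
  exists s; split; auto.
  intros b lb. specialize (Hsmin b lb). apply not_all_ex_not in Hsmin. destruct Hsmin as [n Hn].
  exists (S n). destruct (Htot (y n) b) as [l|[l|l]]; [contradiction| |].
  - subst; auto.
  - eapply Htr; eauto.
Qed.

Lemma closed_sup (D : W -> Prop) (y : nat -> W) (s : W) : closed W lt D ->
  (forall n, lt (y n) (y (S n))) ->
  (forall n, lt (y n) s) -> (forall b, lt b s -> exists n, lt b (y n)) ->
  (forall n, exists m, n <= m /\ D (y m)) -> D s.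
Proof.
  intros HD Hy Hs Hsup Hcof. apply HD.
  - destruct (Hcof 0) as [m [_ Dm]]; eauto.
  - intros b lb. destruct (Hsup b lb) as [n ln]. destruct (Hcof n) as [m [nm Dm]].
    exists (y m); split; [auto|split; [|auto]].
    destruct (mono_le y Hy n m nm) as [e|l]; [rewrite <- e; auto|eapply Htr; eauto].
Qed.

Lemma ctbl_inter (D : nat -> W -> Prop) : (forall k, club W lt (D k)) ->
  forall a, exists x, lt a x /\ forall k, D k x.
Proof.
  intros HD a.
  assert (forall p : nat * W, exists v, D (fst p) v /\ lt (snd p) v) as Hn.
  { intros [k u]. destruct (proj2 (HD k) u) as [v [dv lv]]; eauto. }
  destruct (fchoice _ Hn) as [N HN].
  set (y := fix y n := match n with 0 => a | S n => N (fst (of_nat n), y n) end).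
  assert (Hy : forall n, lt (y n) (y (S n))).
  { intro n. simpl. apply (HN (fst (of_nat n), y n)). }
  destruct (sup y Hy) as [s [Hs Hsup]].
  exists s; split; [apply (Hs 0)|].
  intro k. apply (closed_sup (D k) y s (proj1 (HD k)) Hy Hs Hsup).
  intro n. exists (S (to_nat (k, n))). split.
  - pose proof (to_nat_non_decreasing k n); lia.
  - change (D k (N (fst (of_nat (to_nat (k, n))), y (to_nat (k, n))))).
    rewrite cancel_of_to. apply (HN (k, y (to_nat (k, n)))).
Qed.

Lemma W_le_T : card_le W (nat -> bool).
Proof.
  destruct (wf_rec W (nat -> bool) lt Hwf (fun _ => true) (fun x Q y => ~ Q y)) as [h Hh].
  { intros x g. apply diag. apply seg_image_ctbl. }
  exists h. intros a b e.
  destruct (Htot a b) as [l|[l|l]]; auto.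
  - exfalso; apply (Hh b); eauto.
  - exfalso; apply (Hh a); eauto.
Qed.

Lemma galvin : gp_property W lt (nat -> bool).
Proof.
  intros I [[TI nIT] _] C HC.
  destruct W_le_T as [cW HcW].
  destruct (fchoice _ Hsegle) as [E HE].
  set (tc := fun i d => fun n => if excluded_middle_informative (exists x, le x d /\ E d x = n /\ C i x)
     then true else false).
  set (Eqv := fun d i j => forall x, le x d -> (C i x <-> C j x)).
  assert (tc_eq : forall i j d, tc i d = tc j d -> Eqv d i j).
  { intros i j d e x lx. apply (f_equal (fun h => h (E d x))) in e. unfold tc in e.
    destruct (excluded_middle_informative (exists x0, le x0 d /\ E d x0 = E d x /\ C i x0)) as [[x1 [l1 [e1 c1]]]|n1];
    destruct (excluded_middle_informative (exists x0, le x0 d /\ E d x0 = E d x /\ C j x0)) as [[x2 [l2 [e2 c2]]]|n2];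
    try discriminate.
    - assert (x1 = x) by (apply (HE d); auto). assert (x2 = x) by (apply (HE d); auto). subst; tauto.
    - split; intro c; exfalso; [apply n1|apply n2]; eauto. }
  assert (Hi0 : exists i0, forall d, ~ card_le {j | Eqv d i0 j} (nat -> bool)).
  { apply NNPP; intro N.
    assert (H : forall i, exists d, card_le {j | Eqv d i j} (nat -> bool)).
    { intro i; apply NNPP; intro N2; apply N; exists i; intros d c; apply N2; eauto. }
    destruct (fchoice _ H) as [dl Hdl].
    assert (HG : forall p : W * (nat -> bool), exists g : I -> (nat -> bool), forall j1 j2,
       dl j1 = fst p /\ tc j1 (fst p) = snd p -> dl j2 = fst p /\ tc j2 (fst p) = snd p ->
       g j1 = g j2 -> j1 = j2).
    { intros [d t]. simpl. destruct (classic (exists i, dl i = d /\ tc i d = t)) as [[i [ei ti]]|n].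
      - destruct (Hdl i) as [k Hk]. subst d.
        exists (fun j => match excluded_middle_informative (Eqv (dl i) i j) with
           left q => k (exist _ j q) | right _ => fun _ => false end).
        intros j1 j2 [e1 t1] [e2 t2].
        assert (q1 : Eqv (dl i) i j1) by (apply tc_eq; congruence).
        assert (q2 : Eqv (dl i) i j2) by (apply tc_eq; congruence).
        destruct (excluded_middle_informative (Eqv (dl i) i j1)); [|contradiction].
        destruct (excluded_middle_informative (Eqv (dl i) i j2)); [|contradiction].
        intro ee; apply Hk in ee. apply (f_equal (@proj1_sig _ _)) in ee. exact ee.
      - exists (fun _ _ => false). intros j1 j2 c1; exfalso; apply n; eauto. }
    destruct (fchoice _ HG) as [G HGs].
    apply nIT.
    exists (fun i => pairT (cW (dl i), pairT (tc i (dl i), G (dl i, tc i (dl i)) i))).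
    intros i j e. apply pairT_inj in e. injection e; intros e2 e1.
    apply HcW in e1. apply pairT_inj in e2. injection e2; intros e4 e3.
    rewrite <- e1 in e3, e4. rewrite <- e3 in e4.
    eapply (HGs (dl i, tc i (dl i))); simpl; eauto. }
  destruct Hi0 as [i0 Hi0].
  destruct (wf_rec W I lt Hwf i0 (fun x Q y => ~ Q y /\ Eqv x i0 y)) as [f Hf].
  { intros x g. apply NNPP; intro N. apply (Hi0 x). apply ctbl_le_T.
    apply ctbl_sub with (Q := fun y => exists x', lt x' x /\ g x' = y); [|apply seg_image_ctbl].
    intros y q. apply NNPP; intro N2; apply N; exists y; split; auto. }
  exists f. split.
  { intros a b e. destruct (Htot a b) as [l|[l|l]]; auto.
    - exfalso; apply (proj1 (Hf b)); eauto.
    - exfalso; apply (proj1 (Hf a)); eauto. }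
  split.
  - intros a [g [Xg lg]] Hcof b. apply (proj1 (HC (f b))).
    + exists g; split; auto.
    + intros b' l. destruct (Hcof b' l) as [g' [Xg' l']]. exists g'; auto.
  - intro a.
    assert (Hdec : forall (p : W * nat), exists b, (exists b', le b' (fst p) /\ E (fst p) b' = snd p) ->
        le b (fst p) /\ E (fst p) b = snd p).
    { intros [u n]. destruct (classic (exists b', le b' u /\ E u b' = n)) as [[b' hb]|nn].
      - exists b'; auto.
      - exists u; intro; contradiction. }
    destruct (fchoice _ Hdec) as [dec Hdec'].
    assert (Hstep : forall u, exists v, lt u v /\ C i0 v /\ forall b, le b u -> C (f b) v).
    { intro u.
      destruct (ctbl_inter (fun k => match k with 0 => C i0 | S k' => C (f (dec (u, k'))) end)) with (a := u)
        as [v [lv Hv]].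
      { intros [|k]; apply HC. }
      exists v; split; auto; split; [apply (Hv 0)|].
      intros b lb. specialize (Hv (S (E u b))). simpl in Hv.
      destruct (Hdec' (u, E u b)) as [l2 e2]; [exists b; auto|]. simpl in l2, e2.
      assert (dec (u, E u b) = b) as eb by (apply (HE u); auto).
      rewrite eb in Hv; exact Hv. }
    destruct (fchoice _ Hstep) as [Gs HGs].
    set (z := fix z n := match n with 0 => a | S n => Gs (z n) end).
    assert (Hz : forall n, lt (z n) (z (S n))) by (intro n; apply (HGs (z n))).
    destruct (sup z Hz) as [s [Hs Hsup]].
    assert (C0 : C i0 s).
    { apply (closed_sup (C i0) z s (proj1 (HC i0)) Hz Hs Hsup).
      intro n; exists (S n); split; auto. apply (HGs (z n)). }
    exists s; split; [|apply (Hs 0)].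
    intro b. destruct (Htot b s) as [l|[l|l]].
    + destruct (Hsup b l) as [n ln].
      apply (closed_sup (C (f b)) z s (proj1 (HC (f b))) Hz Hs Hsup).
      intro n'. exists (S (Nat.max n n')). split; [lia|].
      apply (HGs (z (Nat.max n n'))). left.
      destruct (mono_le z Hz n (Nat.max n n')) as [e|l2]; [lia|rewrite <- e; auto|eapply Htr; eauto].
    + subst b. apply (proj2 (Hf s)); [right; auto|]. exact C0.
    + apply (proj2 (Hf b)); [left; auto|]. exact C0.
Qed.

Lemma sub_W (A : Type) : card_le A W -> card_le A nat \/ card_le W A.
Proof.
  intros [g ginj]. destruct (classic (exists u, forall a, lt (g a) u)) as [[u Hu]|N].
  - left. destruct (Hseg u) as [e He]. exists (fun a => e (g a)).
    intros a b ee. apply ginj. apply He; auto.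
  - right. destruct (classic (inhabited W)) as [[w0]|nW].
    2:{ exists (fun w => False_rect _ (nW (inhabits w))). intros x; exfalso; apply nW; constructor; auto. }
    assert (H : forall u, exists a, ~ lt (g a) u).
    { intro u; apply NNPP; intro N2; apply N; exists u; intro a; apply NNPP; intro N3; apply N2; eauto. }
    destruct (H w0) as [a0 _].
    destruct (wf_rec W A lt Hwf a0 (fun x Q y => ~ Q y)) as [h Hh].
    { intros x g'.
      destruct (bounded (fun w => exists y, (exists x', lt x' x /\ g' x' = y) /\ g y = w)) as [u Hu].
      { apply ctbl_image. apply seg_image_ctbl. }
      destruct (H u) as [a Ha]. exists a. intro Q. apply Ha. apply Hu. eauto. }
    exists h. intros a b ee.
    destruct (Htot a b) as [l|[l|l]]; auto.
    + exfalso; apply (Hh b); eauto.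
    + exfalso; apply (Hh a); eauto.
Qed.

Lemma W_inhabited_or (K : Type) : card_le W K \/ inhabited W.
Proof.
  destruct (classic (inhabited W)) as [i|nW]; auto.
  left; exists (fun w => False_rect _ (nW (inhabits w))). intros x; exfalso; apply nW; constructor; auto.
Qed.

Lemma gp_lower (K : Type) : gp_property W lt K -> card_le W K.
Proof.
  intro H. destruct (W_inhabited_or K) as [|[w0]]; auto.
  destruct (card_total W K) as [|KW]; auto.
  destruct (sub_W K KW) as [KN|]; auto.
  exfalso.
  destruct (classic (card_le nat K)) as [NK|nNK].
  - assert (tails : forall a, club W lt (fun b => lt a b)).
    { intro a; split.
      - intros x [g [tg lg]] _. eapply Htr; eauto.
      - intro c. destruct (Htot a c) as [l|[l|l]].
        + destruct (no_max c) as [b lb]; exists b; split; auto; eapply Htr; eauto.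
        + subst; destruct (no_max c) as [b lb]; exists b; auto.
        + destruct (no_max a) as [b lb]; exists b; split; auto; eapply Htr; eauto. }
    destruct (H W) with (C := fun a b => lt a b) as [f [finj [_ Hunb]]]; auto.
    { split; [split|]; auto.
      - intro WK; apply Hunc; eapply card_le_trans; eauto.
      - intros J [JW nWJ]. destruct (sub_W J JW) as [JN|]; [eapply card_le_trans; eauto|contradiction]. }
    destruct (Hunb w0) as [x [Hx _]].
    destruct (Hseg x) as [e He]. apply Hunc. exists (fun b => e (f b)).
    intros a b ee; apply finj; apply He; auto.
  - destruct (H (option K)) with (C := fun (_ : option K) (_ : W) => True) as [f [finj _]].
    + split; [split|].
      * exists Some; intros x y ee; injection ee; auto.
      * intros [h hinj]. apply nNK.
        exists (fun n => Nat.iter n (fun k => h (Some k)) (h None)).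
        intro n; induction n as [|n IH]; intros [|m] ee; simpl in ee; auto.
        -- apply hinj in ee; discriminate.
        -- apply hinj in ee; discriminate.
        -- apply hinj in ee; injection ee; intro; f_equal; auto.
      * intros J [[j jinj] nOJ].
        destruct (classic (inhabited J)) as [[x1]|nJ].
        2:{ exists (fun x => False_rect _ (nJ (inhabits x))). intros x; exfalso; apply nJ; constructor; auto. }
        destruct (classic (exists x0, j x0 = None)) as [[x0 e0]|nN].
        -- destruct (classic (exists k0, forall x, j x <> Some k0)) as [[k0 Hk0]|nk].
           ++ exists (fun x => match j x with Some k => k | None => k0 end).
              intros x y. destruct (j x) as [kx|] eqn:ex; destruct (j y) as [ky|] eqn:ey; intro ee; subst.
              ** apply jinj; congruence.
              ** exfalso; eapply Hk0; eauto.
              ** exfalso; eapply Hk0; eauto.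
              ** apply jinj; congruence.
           ++ exfalso. apply nOJ.
              assert (Hk : forall k, exists x, j x = Some k).
              { intro k; apply NNPP; intro N1; apply nk; exists k; intros x ex; apply N1; eauto. }
              destruct (fchoice _ Hk) as [pre Hpre].
              exists (fun o => match o with None => x0 | Some k => pre k end).
              intros [a|] [b|] ee.
              ** rewrite <- (Hpre a), <- (Hpre b), ee; auto.
              ** rewrite <- (Hpre a), ee, e0; auto.
              ** rewrite <- (Hpre b), <- ee, e0; auto.
              ** auto.
        -- destruct (j x1) as [k1|] eqn:e1; [|exfalso; eauto].
           exists (fun x => match j x with Some k => k | None => k1 end).
           intros x y. destruct (j x) as [kx|] eqn:ex; destruct (j y) as [ky|] eqn:ey; intro ee;
             try (exfalso; eauto; fail). subst; apply jinj; congruence.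
    + intro; split.
      * intros x _ _; auto.
      * intro c; destruct (no_max c) as [b lb]; exists b; auto.
    + destruct KN as [e He]. apply Hunc.
      exists (fun w => match f w with None => 0 | Some k => S (e k) end).
      intros a b. destruct (f a) as [ka|] eqn:ea; destruct (f b) as [kb|] eqn:eb; intro ee; try discriminate;
        apply finj; [injection ee; intro ee'; apply He in ee'; congruence|congruence].
Qed.

End OmegaOne.

Theorem mainTheorem11 :
  forall (W : Type) (lt : W -> W -> Prop), is_omega1 W lt ->
  exists K : Type,
    gp_property W lt K /\
    (forall K' : Type, gp_property W lt K' -> card_le K K') /\
    card_le W K /\
    card_le K (nat -> bool).
Proof.
  intros W lt Hw.
  destruct (WO.exists_wo (nat -> bool)) as [R [Rirr [Rtr [Rtot Rwf]]]].
  destruct (classic (exists y, gp_property W lt {t : nat -> bool | R t y})) as [Hy|Hn].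
  - destruct (wf_min _ R Rwf _ Hy) as [ys [Hys Hmin]].
    exists {t : nat -> bool | R t ys}. split; [exact Hys|]. split; [|split; [apply (gp_lower W lt Hw); exact Hys|apply card_le_sub]].
    intros K' HK'. destruct (card_total {t : nat -> bool | R t ys} K') as [|KK]; auto.
    destruct (card_le_trans _ _ _ KK (card_le_sub _ _)) as [g ginj].
    destruct (order_type (nat -> bool) K' R Rtot Rwf g ginj) as [[y [K1 K2]]|TK].
    + assert (gy : gp_property W lt {t : nat -> bool | R t y}) by (eapply gp_transfer; eauto).
      destruct (Rtot y ys) as [l|[l|l]].
      * exfalso; eapply Hmin; eauto.
      * subst; auto.
      * eapply card_le_trans; [|exact K2].
        exists (fun t => exist _ (proj1_sig t) (Rtr _ _ _ (proj2_sig t) l)).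
        intros [a pa] [b pb] ee. simpl in ee. injection ee; intro; subst. f_equal; apply proof_irrelevance.
    + eapply card_le_trans; [apply card_le_sub|exact TK].
  - exists (nat -> bool). split; [apply (galvin W lt Hw)|]. split; [|split; [apply (gp_lower W lt Hw); apply (galvin W lt Hw)|apply card_le_refl]].
    intros K' HK'. destruct (card_total (nat -> bool) K') as [|[g ginj]]; auto.
    destruct (order_type (nat -> bool) K' R Rtot Rwf g ginj) as [[y [K1 K2]]|TK]; auto.
    exfalso; apply Hn; exists y; eapply gp_transfer; eauto.
Qed.
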